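(* Let $0<p_1\le p_0\le\infty$ and $0<q_0<q_1\le\infty$, with $(p_0,p_1)\notin\{\infty\}\times(0,\infty)$. Then for every integer $A\ge0$ the embedding $$\ell^{q_0}\big(2^{-j/p_0}\cdot\ell^{p_0}\{1,\dots,2^j\}\big)_{j=A}^\infty\hookrightarrow\ell^{q_1}\big(2^{-j/p_1}\cdot\ell^{p_1}\{1,\dots,2^j\}\big)_{j=A}^\infty$$ is not finitely strictly singular.
   Context: For quasi-normed spaces $X_j$ and $q\in(0,\infty]$, $\ell^q(X_j)_{j=A}^\infty$ is the space of sequences $x=(x_j)_{j\ge A}$, $x_j\in X_j$, with $\|x\|=(\sum_j\|x_j\|_{X_j}^q)^{1/q}<\infty$ (supremum if $q=\infty$). For $\lambda>0$, $\lambda\cdot\ell^p\{1,\dots,N\}$ denotes $\mathbb{R}^N$ with quasi-norm $\lambda\|y\|_{\ell^p}$ (with the convention $2^{-j/\infty}=1$). Bernstein numbers: $b_n(T)=\sup\{\inf_{x\in X_n,\|x\|=1}\|Tx\|:\dim X_n=n\}$; $T$ is finitely strictly singular if $b_n(T)\to0$. *)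

(* Defs.v *)
From HB Require Import structures.
From mathcomp Require Import all_boot all_order all_algebra.
From mathcomp Require Import all_classical all_reals all_analysis.
Set Implicit Arguments. Unset Strict Implicit. Unset Printing Implicit Defensive.
Import Order.TTheory GRing.Theory Num.Theory.
Local Open Scope classical_set_scope.
Local Open Scope ring_scope.

(* Elements of the sequence spaces are represented as x : nat -> nat -> R,
   where x j is the j-th block, a vector of R^(2^j) whose coordinates
   1..2^j are stored at indices 0..2^j-1.  Exponents live in \bar R;
   the relevant ones are in (0, +oo]. *)

(* The weighted block quasi-norm  2^(-j/p) * ||y||_{l^p{1..2^j}}
   (with 2^(-j/oo) = 1). For finite p this equals
   (2^(-j) * sum_i |y_i|^p)^(1/p). *)
Definition block_qnorm {R : realType} (p : \bar R) (j : nat) (y : nat -> R)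
  : R :=
  match p with
  | r%:E => (((2 ^+ j)^-1 * \sum_(i < 2 ^ j) (`|y i| `^ r)) `^ r^-1)
  | +oo%E => \big[Num.max/0]_(i < 2 ^ j) `|y i|
  | -oo%E => 0 (* junk, never used *)
  end.

Definition seq_qnorm {R : realType} (q p : \bar R) (A : nat)
  (x : nat -> nat -> R) : \bar R :=
  match q with
  | r%:E => poweR (\sum_(A <= j <oo) ((block_qnorm p j (x j)) `^ r)%:E) r^-1
  | +oo%E => ereal_sup [set (block_qnorm p j (x j))%:E | j in [set j | (A <= j)%N]]
  | -oo%E => 0%E (* junk, never used *)
  end.

Definition seq_space {R : realType} (q p : \bar R) (A : nat) :
  set (nat -> nat -> R) :=
  [set x | (forall j i, ((j < A)%N \/ (2 ^ j <= i)%N) -> x j i = 0)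
           /\ (seq_qnorm q p A x < +oo)%E].

(* L parametrizes an n-dimensional subspace of the space S:
   L is linear and injective from R^n into S. *)
Definition nsubspace_param {R : realType} (S : set (nat -> nat -> R)) (n : nat)
  (L : 'rV[R]_n -> nat -> nat -> R) : Prop :=
  (forall (a : R) (u v : 'rV[R]_n),
     L (a *: u + v) = (fun j i => a * L u j i + L v j i))
  /\ injective L
  /\ (forall u, S (L u)).

Definition bernstein_embedding {R : realType} (q0 p0 q1 p1 : \bar R) (A n : nat)
  : \bar R :=
  ereal_sup
    [set ereal_inf [set seq_qnorm q1 p1 A (L v) |
                     v in [set v | seq_qnorm q0 p0 A (L v) = 1%E]]
    | L in [set L : 'rV[R]_n -> nat -> nat -> R | nsubspace_param (seq_space q0 p0 A) L]].

(* A map is finitely strictly singular iff its Bernstein numbers tend to 0. *)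
Definition embedding_FSS {R : realType} (q0 p0 q1 p1 : \bar R) (A : nat) : Prop :=
  (fun n => bernstein_embedding q0 p0 q1 p1 A n) @ \oo --> (0 : \bar R)%E.

(* Main.v *)
Require Import Defs.
From HB Require Import structures.
From mathcomp Require Import all_boot all_order all_algebra.
From mathcomp Require Import all_classical all_reals all_analysis.
From mathcomp Require Import ring lra.
Import Order.TTheory GRing.Theory Num.Theory.
Local Open Scope ring_scope.

Section K.
Variable R : realType.

Fixpoint Fv (a : nat -> R) (K : nat) (i : nat) : R :=
  match K with
  | 0 => 0
  | K'.+1 => if (i < 2 ^ K')%N then Fv a K' i + a K' else Fv a K' (i - 2 ^ K') - a K'
  end.

Lemma split_sum (a : nat -> R) (g : R -> R) K :
  \sum_(i < 2 ^ K.+1) g (Fv a K.+1 i) =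
  \sum_(i < 2 ^ K) g (Fv a K i + a K) + \sum_(i < 2 ^ K) g (Fv a K i - a K).
Proof.
rewrite -(big_mkord (fun _ => true) (fun i => g (Fv a K.+1 i))) -(big_mkord (fun _ => true) (fun i => g (Fv a K i + a K))) -(big_mkord (fun _ => true) (fun i => g (Fv a K i - a K))) expnS mul2n -addnn.
rewrite (big_cat_nat _ (leq_addr _ _)) //=; congr (_ + _).
  apply: eq_big_nat => i /andP[_ hi] /=; by rewrite hi.
rewrite -{1}(add0n (2 ^ K)%N) big_addn addnK.
apply: eq_big_nat => i /andP[_ hi] /=.
by rewrite ltnNge leq_addl /= addnK.
Qed.

Lemma Fv_lin (a b : nat -> R) (s : R) K i :
  Fv (fun k => s * a k + b k) K i = s * Fv a K i + Fv b K i.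
Proof.
elim: K i => [|K IH] i /=; first by rewrite mulr0 addr0.
by case: ifP => _; rewrite IH; ring.
Qed.

Lemma parseval (a : nat -> R) K :
  \sum_(i < 2 ^ K) (Fv a K i) ^+ 2 = (2 ^ K)%:R * \sum_(k < K) a k ^+ 2.
Proof.
elim: K => [|K IH]; first by rewrite expn0 big_ord1 big_ord0 /= expr0n mulr0.
rewrite (split_sum a (fun x => x ^+ 2)) big_ord_recr /=.
have -> : \sum_(i < 2 ^ K) (Fv a K i + a K) ^+ 2 + \sum_(i < 2 ^ K) (Fv a K i - a K) ^+ 2
  = \sum_(i < 2 ^ K) (2 * (Fv a K i) ^+ 2 + 2 * a K ^+ 2).
  by rewrite -big_split /=; apply: eq_bigr => i _; ring.
rewrite big_split /= -!mulr_sumr IH sumr_const card_ord expnS natrM.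
rewrite -[_ *+ 2 ^ K]mulr_natl. ring.
Qed.


Lemma cosh_bound (x : R) : x ^+ 2 <= 1/4 -> expR x + expR (- x) <= 2 * expR (2 * x ^+ 2).
Proof.
move=> hx.
have h1 := expR_ge1Dx (- x). have h2 := expR_ge1Dx x.
have h3 := expR_ge1Dx (2 * x ^+ 2).
have hm := expRxMexpNx_1 x.
have hu := expR_gt0 x. have hw := expR_gt0 (- x).
set u := expR x in h1 h2 hm hu *. set w := expR (- x) in h1 h2 hm hu hw *.
have hx1 : x <= 1/2 by nra.
have hx2 : - (1/2) <= x by nra.
have e1 : u * (1 - x) <= 1 by nra.
have e2 : w * (1 + x) <= 1 by nra.
have e3 : (1 - x ^+ 2) * (u + w) <= 2 by nra.
have e4 : (u + w) <= 2 + 4 * x ^+ 2 by nra.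
nra.
Qed.

Lemma exp_sum (a : nat -> R) (lam : R) K :
  (forall k, (k < K)%N -> (lam * a k) ^+ 2 <= 1/4) ->
  \sum_(i < 2 ^ K) expR (lam * Fv a K i) <=
  (2 ^ K)%:R * expR (2 * lam ^+ 2 * \sum_(k < K) a k ^+ 2).
Proof.
elim: K => [|K IH] hK.
  by rewrite expn0 big_ord1 big_ord0 /= mulr0 expR0 mul1r mulr0 expR0.
rewrite (split_sum a (fun x => expR (lam * x))) big_ord_recr /=.
have -> : \sum_(i < 2 ^ K) expR (lam * (Fv a K i + a K)) +
   \sum_(i < 2 ^ K) expR (lam * (Fv a K i - a K))
  = (\sum_(i < 2 ^ K) expR (lam * Fv a K i)) * (expR (lam * a K) + expR (- (lam * a K))).
  rewrite -big_split /= mulr_suml; apply: eq_bigr => i _.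
  by rewrite [RHS]mulrDr -!expRD; congr (expR _ + expR _); ring.
have hc := @cosh_bound (lam * a K) (hK K (ltnSn K)).
have hs : 0 <= \sum_(i < 2 ^ K) expR (lam * Fv a K i) by apply: sumr_ge0 => i _; exact: expR_ge0.
have IH' := IH (fun k hk => hK k (ltnW hk)).
apply: le_trans (ler_pM hs _ IH' hc) _.
  by rewrite addr_ge0 // expR_ge0.
rewrite expnS natrM mulrDr expRD.
have -> : 2 * lam ^+ 2 * a K ^+ 2 = 2 * (lam * a K) ^+ 2 by ring.
set E1 := expR (2 * lam ^+ 2 * _). set E2 := expR (2 * _).
rewrite le_eqVlt; apply/orP; left; apply/eqP; ring.
Qed.


Lemma abs_le_exp (t : R) : expR (`|t|) <= expR t + expR (- t).
Proof.
case: (lerP 0 t) => ht.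
  by rewrite ger0_norm // lerDl expR_ge0.
by rewrite ltr0_norm // lerDr expR_ge0.
Qed.

Definition Cm (m : nat) : R := (m.+1)`!%:R * 2 ^+ m.+1.

Lemma Cm_gt0 m : 0 < Cm m.
Proof. by rewrite /Cm mulr_gt0 // ?exprn_gt0 // ltr0n fact_gt0. Qed.

Lemma pow_le_exp (t : R) (m : nat) :
  `|t| ^+ m.+1 <= Cm m * (expR (t / 2) + expR (- (t / 2))).
Proof.
have h := @expR_ge1Dxn R (`|t| / 2) m (divr_ge0 (normr_ge0 _) (ler0n _ 2)).
have h2 := abs_le_exp (t / 2).
have e : `|t / 2| = `|t| / 2 by rewrite normrM normfV (@ger0_norm _ 2).
rewrite e in h2.
have hf : 0 < (m.+1)`!%:R :> R by rewrite ltr0n fact_gt0.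
have h3 : (`|t| / 2) ^+ m.+1 <= (m.+1)`!%:R * expR (`|t| / 2).
  rewrite -ler_pdivrMl //.
  apply: le_trans _ h; rewrite mulrC lerDr //.
rewrite /Cm -mulrA; apply: le_trans (_ : _ <= (m.+1)`!%:R * 2 ^+ m.+1 * expR (`|t| / 2)) _.
  rewrite mulrAC -ler_pdivrMr ?exprn_gt0 // -expr_div_n //.
rewrite -mulrA ler_pM2l //; rewrite ler_pM2l ?exprn_gt0 //.
Qed.

Lemma powR_le_pow (t p : R) (m : nat) : 0 < p -> p <= m.+1%:R ->
  `|t| `^ p <= 1 + `|t| ^+ m.+1.
Proof.
move=> hp hpm.
case: (lerP `|t| 1) => ht.
  have : `|t| `^ p <= 1.
    case: (eqVneq `|t| 0) => h0.
      by rewrite h0 powR0 ?gt_eqF.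
    have h1 : 0 < `|t| <= 1 by rewrite ht andbT lt_def h0 normr_ge0.
    by rewrite -(powRr0 `|t|); apply: (ger_powR h1); exact: ltW.
  move=> h; apply: (le_trans h); rewrite lerDl exprn_ge0 //.
rewrite -powR_mulrn //.
apply: le_trans (_ : _ <= `|t| `^ m.+1%:R) _.
  exact: (ler_powR (ltW ht)).
by rewrite lerDr.
Qed.


Lemma ak_le_S (a : nat -> R) K k : (k < K)%N -> a k ^+ 2 <= \sum_(l < K) a l ^+ 2.
Proof.
move=> hk; rewrite (bigD1 (Ordinal hk)) //= lerDl.
by apply: sumr_ge0 => i _; exact: sqr_ge0.
Qed.

Definition E0 : R := expR (2^-1).

Lemma exp_pm (a : nat -> R) K : \sum_(k < K) a k ^+ 2 = 1 ->
  \sum_(i < 2 ^ K) (expR (Fv a K i / 2) + expR (- (Fv a K i / 2))) <= 2 * (2 ^ K)%:R * E0.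
Proof.
move=> hS.
have hk : forall lam, lam ^+ 2 = 4^-1 -> forall k, (k < K)%N -> (lam * a k) ^+ 2 <= 1/4.
  move=> lam hl k hkK; rewrite exprMn hl.
  have := @ak_le_S a K k hkK; rewrite hS => h.
  rewrite mul1r -[X in _ <= X]mulr1 ler_pM2l //; by rewrite invr_gt0.
have e1 : (2 ^+ 2 : R)^-1 = 4^-1 by rewrite expr2 -natrM.
have q1 : (2^-1 : R) ^+ 2 = 4^-1 by rewrite exprVn e1.
have q2 : (- 2^-1 : R) ^+ 2 = 4^-1 by rewrite sqrrN exprVn e1.
have h1 := @exp_sum a (2^-1) K (hk _ q1).
have h2 := @exp_sum a (- 2^-1) K (hk _ q2).
rewrite big_split /= mulr2n mulrDl mulrDl.
apply: lerD.
  have := h1; rewrite hS mulr1.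
  have -> : 2 * 2^-1 ^+ 2 = 2^-1 :> R by rewrite exprVn expr2 invfM mulrA mulfV // mul1r.
  rewrite mul1r; move=> h; apply: le_trans h; rewrite le_eqVlt; apply/orP; left; apply/eqP.
  by apply: eq_bigr => i _; rewrite mulrC.
have := h2; rewrite hS mulr1 sqrrN.
have -> : 2 * 2^-1 ^+ 2 = 2^-1 :> R by rewrite exprVn expr2 invfM mulrA mulfV // mul1r.
rewrite mul1r; move=> h; apply: le_trans h; rewrite le_eqVlt; apply/orP; left; apply/eqP.
by apply: eq_bigr => i _; rewrite mulNr mulrC.
Qed.

Lemma moment_bound (a : nat -> R) K m : \sum_(k < K) a k ^+ 2 = 1 ->
  \sum_(i < 2 ^ K) `|Fv a K i| ^+ m.+1 <= Cm m * (2 * (2 ^ K)%:R * E0).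
Proof.
move=> hS.
apply: le_trans (_ : _ <= \sum_(i < 2 ^ K) Cm m * (expR (Fv a K i / 2) + expR (- (Fv a K i / 2)))) _.
  by apply: ler_sum => i _; exact: pow_le_exp.
rewrite -mulr_sumr ler_pM2l ?Cm_gt0 //; exact: exp_pm.
Qed.


Definition gB (t : R) : R := if 2^-1 <= t ^+ 2 then 1 else 0.

Lemma pt_lower (t C : R) : 0 < C -> t ^+ 2 <= 2^-1 + `|t| ^+ 4 / (4 * C) + C * gB t.
Proof.
move=> hC.
have e4' : `|t| ^+ 4 = t ^+ 4 by rewrite -normrX ger0_norm // exprn_even_ge0.
have e4 : `|t| ^+ 4 = (t ^+ 2) ^+ 2 by rewrite e4' -exprM.
have h4 : 0 <= `|t| ^+ 4 / (4 * C) by rewrite divr_ge0 // ?exprn_ge0 // mulr_ge0 // ltW.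
rewrite /gB; case: ifP => h.
  have : t ^+ 2 - C <= `|t| ^+ 4 / (4 * C).
    rewrite ler_pdivlMr ?mulr_gt0 // e4.
    have := sqr_ge0 (t ^+ 2 - 2 * C). nra.
  lra.
move/negbT: h; rewrite -ltNge => h.
lra.
Qed.

Definition C4 : R := Cm 3 * 2 * E0.

Lemma C4_gt0 : 0 < C4.
Proof. by rewrite /C4 !mulr_gt0 ?Cm_gt0 // /E0 expR_gt0. Qed.

Lemma count_lower (a : nat -> R) K : \sum_(k < K) a k ^+ 2 = 1 ->
  (2 ^ K)%:R / (4 * C4) <= \sum_(i < 2 ^ K) gB (Fv a K i).
Proof.
move=> hS.
have hP := parseval a K; rewrite hS mulr1 in hP.
have hM := @moment_bound a K 3 hS.
have hC := C4_gt0.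
have hpt : \sum_(i < 2 ^ K) (Fv a K i) ^+ 2 <= \sum_(i < 2 ^ K)
   (2^-1 + `|Fv a K i| ^+ 4 / (4 * C4) + C4 * gB (Fv a K i)).
  by apply: ler_sum => i _; exact: pt_lower.
rewrite !big_split /= -mulr_suml -mulr_sumr sumr_const card_ord hP in hpt.
set N := (2 ^ K)%:R : R in hP hpt hM *.
set G := \sum_(i < 2 ^ K) gB (Fv a K i) in hpt *.
set M := \sum_(i < 2 ^ K) `|Fv a K i| ^+ 4 in hpt hM.
have hM2 : M <= C4 * N.
  apply: (le_trans hM); rewrite /C4.
  have -> : Cm 3 * (2 * N * E0) = Cm 3 * 2 * E0 * N by ring.
  by [].
have hy : M / (4 * C4) * (4 * C4) = M by rewrite divfK // gt_eqF // mulr_gt0.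
set y := M / (4 * C4) in hy hpt *.
have hy2 : y <= N / 4 by nra.
have hN : (2^-1 : R) *+ (2 ^ K)%N = N / 2 by rewrite -(mulr_natr (2^-1 : R) (2 ^ K)%N) mulrC.
rewrite hN in hpt.
have hz : N / (4 * C4) * (4 * C4) = N by rewrite divfK // gt_eqF // mulr_gt0.
set z := N / (4 * C4) in hz *.
nra.
Qed.

Lemma lower_powR (a : nat -> R) K r : 0 < r -> \sum_(k < K) a k ^+ 2 = 1 ->
  (2^-1) `^ r * ((2 ^ K)%:R / (4 * C4)) <= \sum_(i < 2 ^ K) `|Fv a K i| `^ r.
Proof.
move=> hr hS.
apply: le_trans (_ : _ <= (2^-1) `^ r * \sum_(i < 2 ^ K) gB (Fv a K i)) _.
  by rewrite ler_pM2l ?powR_gt0 //; exact: count_lower.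
rewrite mulr_sumr; apply: ler_sum => i _.
rewrite /gB; case: ifP => h; last by rewrite mulr0 powR_ge0.
rewrite mulr1; apply: ge0_ler_powR; [exact: ltW| by rewrite nnegrE | by rewrite nnegrE|].
rewrite leNgt; apply/negP => h2.
have : `|Fv a K i| ^+ 2 < 4^-1.
  have -> : (4^-1 : R) = 2^-1 ^+ 2 by rewrite exprVn expr2 -natrM.
  by rewrite ltr_pXn2r // ?nnegrE.
rewrite real_normK ?num_real // => h3.
have : (4^-1 : R) < 2^-1 by rewrite ltf_pV2 ?ltr_nat ?posrE.
lra.
Qed.


Lemma Fv_scale (a : nat -> R) (s : R) K i : Fv (fun k => s * a k) K i = s * Fv a K i.
Proof. by elim: K i => [|K IH] i /=; [rewrite mulr0 | case: ifP => _; rewrite IH; ring]. Qed.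

Lemma Fv_zero (a : nat -> R) K i : (forall k, (k < K)%N -> a k = 0) -> Fv a K i = 0.
Proof.
elim: K i => [|K IH] i h //=.
by rewrite !IH ?h // ?subr0 ?addr0 ?if_same // => k hk; apply: h; exact: ltnW.
Qed.

Definition Cu (r : R) : R := 1 + Cm (Num.Def.archi_bound r) * 2 * E0.
Definition Cl (r : R) : R := (2^-1) `^ r / (4 * C4).

Lemma Cu_gt0 r : 0 < Cu r.
Proof.
have h : 0 < Cm (Num.Def.archi_bound r) * 2 * E0 by apply: mulr_gt0; [apply: mulr_gt0; [exact: Cm_gt0| by []] | exact: expR_gt0].
rewrite /Cu; lra.
Qed.

Lemma Cl_gt0 r : 0 < Cl r.
Proof. by rewrite /Cl divr_gt0 ?powR_gt0 // mulr_gt0 // C4_gt0. Qed.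

Lemma avg_upper (a : nat -> R) K r : 0 < r -> \sum_(k < K) a k ^+ 2 = 1 ->
  (2 ^+ K)^-1 * \sum_(i < 2 ^ K) `|Fv a K i| `^ r <= Cu r.
Proof.
move=> hr hS.
set m := Num.Def.archi_bound r.
have hm : r <= m.+1%:R.
  apply: le_trans (ltW (archi_boundP (ltW hr))) _; by rewrite ler_nat.
have hN : 0 < (2 ^+ K : R) by rewrite exprn_gt0.
rewrite ler_pdivrMl //.
apply: le_trans (_ : _ <= \sum_(i < 2 ^ K) (1 + `|Fv a K i| ^+ m.+1)) _.
  by apply: ler_sum => i _; exact: powR_le_pow.
rewrite big_split /= sumr_const card_ord.
have := @moment_bound a K m hS.
rewrite natrX /Cu => h.
rewrite -/m.
have -> : 2 ^+ K * (1 + Cm m * 2 * E0) = 2 ^+ K + Cm m * (2 * 2 ^+ K * E0) by ring.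
by rewrite lerD2l.
Qed.

Lemma avg_lower (a : nat -> R) K r : 0 < r -> \sum_(k < K) a k ^+ 2 = 1 ->
  Cl r <= (2 ^+ K)^-1 * \sum_(i < 2 ^ K) `|Fv a K i| `^ r.
Proof.
move=> hr hS.
have hN : 0 < (2 ^+ K : R) by rewrite exprn_gt0.
rewrite ler_pdivlMl //.
have := @lower_powR a K r hr hS; rewrite natrX /Cl => h.
apply: le_trans h; rewrite le_eqVlt; apply/orP; left; apply/eqP.
rewrite mulrA (mulrC (2 ^+ K)) -mulrA; congr (_ * _); by rewrite mulrC.
Qed.


Lemma bq_scale (r s : R) j (y : nat -> R) : 0 < r -> 0 <= s ->
  block_qnorm r%:E j (fun i => s * y i) = s * block_qnorm r%:E j y.
Proof.
move=> hr hs /=.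
under eq_bigr do rewrite normrM (ger0_norm hs) powRM //.
have hX : 0 <= (2 ^+ j)^-1 * \sum_(i < 2 ^ j) `|y i| `^ r.
  by rewrite mulr_ge0 ?invr_ge0 ?exprn_ge0 // sumr_ge0 // => i _; exact: powR_ge0.
rewrite -mulr_sumr mulrCA powRM ?powR_ge0 // -powRrM mulfV ?gt_eqF // powRr1 //.
Qed.

Lemma bq_zero (r : R) j : 0 < r -> block_qnorm r%:E j (fun _ => 0) = 0.
Proof.
move=> hr /=; rewrite big1 ?mulr0 ?powR0 // ?invr_eq0 ?gt_eqF //.
by move=> i _; rewrite normr0 powR0 // gt_eqF.
Qed.

Lemma bq_bounds (a : nat -> R) K r : 0 < r -> \sum_(k < K) a k ^+ 2 = 1 ->
  Cl r `^ r^-1 <= block_qnorm r%:E K (Fv a K) <= Cu r `^ r^-1.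
Proof.
move=> hr hS /=.
have hX : 0 <= (2 ^+ K)^-1 * \sum_(i < 2 ^ K) `|Fv a K i| `^ r.
  by rewrite mulr_ge0 ?invr_ge0 ?exprn_ge0 // sumr_ge0 // => i _; exact: powR_ge0.
have hri : 0 <= r^-1 by rewrite invr_ge0 ltW.
apply/andP; split; apply: ge0_ler_powR => //; rewrite ?nnegrE //.
- exact: ltW (Cl_gt0 r).
- exact: avg_lower.
- exact: ltW (Cu_gt0 r).
- exact: avg_upper.
Qed.

Lemma khin (r0 r1 : R) : 0 < r0 -> 0 < r1 -> exists2 c : R, 0 < c &
  forall (a : nat -> R) j, c * block_qnorm r0%:E j (Fv a j) <= block_qnorm r1%:E j (Fv a j).
Proof.
move=> h0 h1.
exists (Cl r1 `^ r1^-1 / Cu r0 `^ r0^-1).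
  by rewrite divr_gt0 // powR_gt0 // ?Cl_gt0 ?Cu_gt0.
move=> a j.
set S := \sum_(k < j) a k ^+ 2.
have hS0 : 0 <= S by rewrite /S sumr_ge0 // => i _; exact: sqr_ge0.
case: (eqVneq S 0) => hS.
  have hz : Fv a j = fun _ => 0.
    apply: funext => i; apply: Fv_zero => k hk.
    have := @psumr_eq0P _ _ _ (fun i : 'I_j => a i ^+ 2) (fun i _ => sqr_ge0 _) hS (Ordinal hk) isT.
    by move/eqP; rewrite sqrf_eq0 => /eqP.
  by rewrite hz !bq_zero // mulr0.
have hSp : 0 < S by rewrite lt_def hS hS0.
set s := Num.sqrt S.
have hs : 0 < s by rewrite sqrtr_gt0.
set b := fun k => a k / s.
have hab : Fv a j = fun i => s * Fv b j i.
  apply: funext => i; rewrite -Fv_scale; congr Fv; apply: funext => k.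
  by rewrite /b mulrC divfK // gt_eqF.
have hb : \sum_(k < j) b k ^+ 2 = 1.
  rewrite /b; under eq_bigr do rewrite expr_div_n.
  by rewrite -mulr_suml sqr_sqrtr // -/S mulfV.
rewrite hab (@bq_scale r0 s j (Fv b j) h0 (ltW hs)) (@bq_scale r1 s j (Fv b j) h1 (ltW hs)).
have /andP[l1 u1] := @bq_bounds b j r1 h1 hb.
have /andP[l0 u0] := @bq_bounds b j r0 h0 hb.
have hcu : 0 < Cu r0 `^ r0^-1 by rewrite powR_gt0 // Cu_gt0.
rewrite mulrCA; apply: ler_wpM2l; first exact: ltW.
apply: le_trans l1.
rewrite mulrAC ler_pdivrMr //; apply: ler_wpM2l => //.
by rewrite powR_ge0.
Qed.

End K.
Arguments Fv {R} a K i.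

Section S2.
Variable R : realType.
Lemma bq_inf j (y : nat -> R) : block_qnorm +oo j y = \big[Num.max/0]_(i < 2 ^ j) `|y i|.
Proof. by []. Qed.
Lemma bq_fin (r : R) j (y : nat -> R) : block_qnorm r%:E j y =
  (((2 ^+ j)^-1 * \sum_(i < 2 ^ j) (`|y i| `^ r)) `^ r^-1).
Proof. by []. Qed.

Lemma bq_ext (p : \bar R) j (y z : nat -> R) : (forall i, (i < 2 ^ j)%N -> y i = z i) ->
  block_qnorm p j y = block_qnorm p j z.
Proof.
move=> h; case: p => [r| |]; rewrite ?bq_inf ?bq_fin.
- by congr (_ `^ _); congr (_ * _); apply: eq_bigr => i _; rewrite h.
- by apply: eq_bigr => i _; rewrite h.
- by [].
Qed.

Lemma bq_zero' (p : \bar R) j : (0 < p)%E -> block_qnorm p j (fun _ => 0) = 0.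
Proof.
case: p => [r| |] hr.
- by apply: bq_zero.
- rewrite bq_inf; elim/big_ind: _ => //; [by move=> x z -> ->; rewrite maxxx | by move=> i _; rewrite normr0].
- by [].
Qed.

Lemma bq_ge0 (p : \bar R) j y : 0 <= block_qnorm p j y.
Proof.
case: p => [r| |]; rewrite ?bq_inf ?bq_fin.
- exact: powR_ge0.
- by elim/big_ind: _ => // x z hx hz; rewrite le_max hx.
- by [].
Qed.
End S2.

Section S3.
Variable R : realType.
Lemma sq_fin (r : R) (p : \bar R) A (x : nat -> nat -> R) : seq_qnorm r%:E p A x =
  poweR (\sum_(A <= j <oo) ((block_qnorm p j (x j)) `^ r)%:E)%E r^-1.
Proof. by []. Qed.
Lemma sq_inf (p : \bar R) A (x : nat -> nat -> R) : seq_qnorm +oo p A x =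
  ereal_sup [set (block_qnorm p j (x j))%:E | j in [set j | (A <= j)%N]].
Proof. by []. Qed.

Lemma seq_single (q p : \bar R) A j (x : nat -> nat -> R) : (A <= j)%N -> (0 < q)%E ->
  (forall j', j' != j -> block_qnorm p j' (x j') = 0) ->
  seq_qnorm q p A x = (block_qnorm p j (x j))%:E.
Proof.
move=> hAj hq hz.
have hb := @bq_ge0 R p j (x j).
case: q hq => [r| |] hr.
- rewrite sq_fin.
  have hr' : r != 0 by rewrite gt_eqF.
  have -> : (\sum_(A <= k <oo) ((block_qnorm p k (x k)) `^ r)%:E)%E
      = ((block_qnorm p j (x j)) `^ r)%:E.
    apply: (@lim_near_cst _ (@ereal_hausdorff R)); near=> n.
    have hjn : (j < n)%N by near: n; exists j.+1 => // k.
    rewrite (big_cat_nat hAj (ltnW hjn)) /= (@big_ltn _ _ _ j n) //.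
    rewrite big1_seq; last first.
      move=> k /andP[_]; rewrite mem_index_iota => /andP[_ hk].
      by rewrite hz ?powR0 // neq_ltn hk.
    rewrite big1_seq; last first.
      move=> k /andP[_]; rewrite mem_index_iota => /andP[hk _].
      by rewrite hz ?powR0 // neq_ltn hk orbT.
    by rewrite add0e adde0.
  by rewrite poweR_EFin -powRrM mulfV // powRr1.
- rewrite sq_inf; apply/le_anti/andP; split.
    apply: ge_ereal_sup => _ [k hk <-].
    case: (eqVneq k j) => [->|hkj]; first by [].
    by rewrite hz // lee_fin.
  by apply: le_ereal_sup_tmp; exists (block_qnorm p j (x j))%:E => //; exists j.
- by [].
Unshelve. all: by end_near.
Qed.

Definition av n (v : 'rV[R]_n) (k : nat) : R :=
  match (insub k : option 'I_n) with Some l => v 0 l | None => 0 end.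
Arguments av {n} v k.

Lemma av_lin n (a : R) (u w : 'rV[R]_n) k : av (a *: u + w) k = a * av u k + av w k.
Proof.
rewrite /av; case: insubP => [l _ _|_]; last by rewrite mulr0 addr0.
by rewrite !mxE.
Qed.

Lemma av_lt n (v : 'rV[R]_n) k (hk : (k < n)%N) : av v k = v 0 (Ordinal hk).
Proof.
rewrite /av insubT /=; congr (v 0 _); exact: val_inj.
Qed.

Lemma av_ord n (v : 'rV[R]_n) (l : 'I_n) : av v l = v 0 l.
Proof. by rewrite /av valK. Qed.

Definition Lx A n (v : 'rV[R]_n) : nat -> nat -> R :=
  fun j i => if (j == maxn A n) && (i < 2 ^ j)%N then Fv (av v) j i else 0.
Arguments Lx A {n} v.

Lemma Lx_norm (q p : \bar R) A n (v : 'rV[R]_n) : (0 < q)%E -> (0 < p)%E ->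
  seq_qnorm q p A (Lx A v) = (block_qnorm p (maxn A n) (Fv (av v) (maxn A n)))%:E.
Proof.
move=> hq hp.
rewrite (@seq_single q p A (maxn A n)) ?leq_maxl //.
  congr (_%:E); apply: bq_ext => i hi; by rewrite /Lx eqxx hi.
move=> j' hj'; rewrite -(@bq_zero' R p j' hp); apply: bq_ext => i _.
by rewrite /Lx (negbTE hj').
Qed.

Lemma Lx_param (q p : \bar R) A n : (0 < q)%E -> (0 < p)%E ->
  nsubspace_param (seq_space q p A) (@Lx A n).
Proof.
move=> hq hp; split; [|split].
- move=> a u w; apply: funext => j; apply: funext => i; rewrite /Lx.
  case: ifP => _; last by rewrite mulr0 addr0.
  rewrite -Fv_lin; congr Fv; apply: funext => k; exact: av_lin.
- move=> u w huw.
  set J := maxn A n.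
  set d := fun k => -1 * av w k + av u k.
  have hd : forall i, (i < 2 ^ J)%N -> Fv d J i = 0.
    move=> i hi; rewrite Fv_lin.
    have := congr1 (fun f => f J i) huw; rewrite /Lx eqxx hi /= => ->.
    ring.
  have hP := @parseval R d J.
  rewrite big1 in hP; last by move=> i _; rewrite hd ?ltn_ord // expr0n.
  move/esym/eqP: hP; rewrite mulf_eq0 pnatr_eq0 expn_eq0 /= => /eqP hS.
  apply/rowP => l.
  have hl : (l < J)%N := leq_trans (ltn_ord l) (leq_maxr A n).
  have := @psumr_eq0P _ _ _ (fun i : 'I_J => d i ^+ 2) (fun i _ => sqr_ge0 _) hS (Ordinal hl) isT.
  move/eqP; rewrite sqrf_eq0 /d /= !av_ord => /eqP h.
  lra.
- move=> u; split.
    move=> j i h; rewrite /Lx; case: eqP => // hj; subst j; case: h => h.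
      by move: h; rewrite ltnNge leq_maxl.
    by rewrite ltnNge h.
  by rewrite Lx_norm // ltry.
Qed.
End S3.
Arguments av {R n} v k.
Arguments Lx {R} A {n} v.
Local Open Scope classical_set_scope.
Local Open Scope ereal_scope.

Theorem proposition3p8 (R : realType) (p0 p1 q0 q1 : \bar R) (A : nat) :
  0 < p1 -> p1 <= p0 -> 0 < q0 -> q0 < q1 ->
  ~ (p0 = +oo /\ p1 < +oo) ->
  ~ embedding_FSS q0 p0 q1 p1 A.
Proof.
move=> hp1 hp10 hq0 hq01 hnot.
have hq1 : 0 < q1 := lt_trans hq0 hq01.
have hp0 : 0 < p0 := lt_le_trans hp1 hp10.
have [c hc key] : exists2 c : R, (0 < c)%R & forall n (v : 'rV[R]_n),
   (c * block_qnorm p0 (maxn A n) (Fv (av v) (maxn A n))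
     <= block_qnorm p1 (maxn A n) (Fv (av v) (maxn A n)))%R.
  case: p1 hp1 hp10 hnot hp0 => [r1| |] hp1 hp10 hnot hp0.
  - case: p0 hp10 hnot hp0 => [r0| |] hp10 hnot hp0.
    + have [c hc hk] := @khin R r0 r1 hp0 hp1.
      by exists c => // n v; exact: hk.
    + by exfalso; apply: hnot; split => //; exact: ltry.
    + by [].
  - case: p0 hp10 hnot hp0 => [r0| |] hp10 hnot hp0.
    + by [].
    + by exists 1%R => // n v; rewrite mul1r.
    + by [].
  - by [].
move=> hfss.
have hb : forall n, c%:E <= bernstein_embedding q0 p0 q1 p1 A n.
  move=> n; rewrite /bernstein_embedding.
  apply: le_ereal_sup_tmp.
  exists (ereal_inf [set seq_qnorm q1 p1 A (Lx A v) | v in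
                     [set v : 'rV[R]_n | seq_qnorm q0 p0 A (Lx A v) = 1]]).
    by exists (@Lx R A n) => //; apply: Lx_param.
  apply: le_ereal_inf_tmp => _ [v hv <-].
  rewrite /= Lx_norm // in hv; rewrite Lx_norm // lee_fin.
  case: hv => hv.
  by have := key n v; rewrite hv mulr1.
have hl := cvg_lim (@ereal_hausdorff R) hfss.
have h2 : \forall n \near \oo, c%:E <= bernstein_embedding q0 p0 q1 p1 A n.
  by apply: nearW.
have := lime_ge (cvgP _ hfss) h2.
move=> /(_ eventually_filter). rewrite hl ?lee_fin ?leNgt ?hc //.
Qed.
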